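(* Let $G=(\mathscr{V},\mathscr{E},m_0,\theta)$ be a weighted graph (locally finite, connected, without loops), and let $m:\mathscr{V}\to(0,\infty)$ be arbitrary. Define, for $x\in\mathscr{V}$, \[ W_m(x):=\frac{1}{m_0^2(x)}\sum_{y\in\mathscr{V}}\mathscr{E}(x,y)\,\frac{m(y)}{m(x)}\,\frac{m_0(x)}{m_0(y)},\qquad V_m(x):=d_G(x)-W_m(x). \] Then \[ \langle f, V_m(Q)f\rangle\le \langle f,\Delta_{\mathscr{E},\theta}f\rangle\quad\text{for all } f\in\mathcal{C}_c(\mathscr{V}). \] Moreover, if $G$ is bi-partite, then \[ \langle f,\Delta_{\mathscr{E},\theta}f\rangle\le\langle f,(d_G(Q)+W_m(Q))f\rangle\quad\text{for all } f\in\mathcal{C}_c(\mathscr{V}). \]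
   Context: A weighted graph $G=(\mathscr{V},\mathscr{E},m_0,\theta)$ consists of a countable set $\mathscr{V}$, a symmetric map $\mathscr{E}:\mathscr{V}\times\mathscr{V}\to[0,\infty)$, a vertex weight $m_0:\mathscr{V}\to(0,\infty)$ and a phase $\theta:\mathscr{V}\times\mathscr{V}\to[-\pi,\pi]$ with $\theta(x,y)=-\theta(y,x)$. Vertices $x,y$ are neighbors ($x\sim y$) if $\mathscr{E}(x,y)\neq0$. Locally finite: every vertex has finitely many neighbors; connected: any two vertices are joined by a finite sequence of successive neighbors; no loops: $\mathscr{E}(x,x)=0$. The Hilbert space is $\ell^2(\mathscr{V},m_0^2)$ with $\langle f,g\rangle=\sum_x m_0^2(x)\overline{f(x)}g(x)$; $\mathcal{C}_c(\mathscr{V})$ denotes finitely supported functions. $\Delta_{\mathscr{E},\theta}$ is the Friedrichs extension of the form $\frac12\sum_{x,y}\mathscr{E}(x,y)|f(x)-e^{i\theta(x,y)}f(y)|^2$ on $\mathcal{C}_c(\mathscr{V})$; on $\mathcal{C}_c(\mathscr{V})$ it acts by $(\Delta_{\mathscr{E},\theta}f)(x)=m_0^{-2}(x)\sum_y\mathscr{E}(x,y)(f(x)-e^{i\theta(x,y)}f(y))$. The weighted degree is $d_G(x)=m_0^{-2}(x)\sum_y\mathscr{E}(x,y)$. For a function $W$ on $\mathscr{V}$, $W(Q)$ is multiplication by $W$. A graph is bi-partite if $\mathscr{V}$ can be partitioned into two subsets such that no two vertices in the same subset are neighbors. *)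

(* Defs.v *)
From HB Require Import structures.
From mathcomp Require Import all_boot all_order all_algebra.
From mathcomp Require Import all_classical all_reals.
From mathcomp Require Import trigo.
From mathcomp Require Import complex.

Set Implicit Arguments.
Unset Strict Implicit.
Unset Printing Implicit Defensive.
Import Order.TTheory GRing.Theory Num.Theory.
Local Open Scope classical_set_scope.
Local Open Scope ring_scope.
Local Open Scope complex_scope.

Record weighted_graph (R : realType) (V : countType) := WeightedGraph {
  wE : V -> V -> R;
  wm0 : V -> R;
  wtheta : V -> V -> R;
  wE_sym : forall x y, wE x y = wE y x;
  wE_ge0 : forall x y, 0 <= wE x y;
  wm0_gt0 : forall x, 0 < wm0 x;
  wtheta_range : forall x y, - pi <= wtheta x y <= pi;
  wtheta_anti : forall x y, wtheta x y = - wtheta y x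
}.

Section Graph.
Variables (R : realType) (V : countType) (G : weighted_graph R V).

Definition neighbors (x y : V) : bool := wE G x y != 0.

Definition locally_finite : Prop :=
  forall x : V, finite_set [set y | neighbors x y].

Definition connected_graph : Prop :=
  forall x y : V, exists s : seq V, path neighbors x s /\ last x s = y.

Definition no_loops : Prop := forall x : V, wE G x x = 0.

Definition bipartite : Prop :=
  exists A : set V, forall x y : V, neighbors x y -> (A x <-> ~ A y).

Definition finsupp (f : V -> R[i]) : Prop := finite_set [set x | f x != 0].

Definition expi (t : R) : R[i] := (cos t) +i* (sin t).

Definition inner (f g : V -> R[i]) : R[i] :=
  \sum_(x \in [set: V]) ((wm0 G x ^+ 2)%:C * (f x)^* * g x).

Definition laplacian (f : V -> R[i]) (x : V) : R[i] :=
  ((wm0 G x ^+ 2)^-1)%:C *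
  \sum_(y \in [set: V]) ((wE G x y)%:C * (f x - expi (wtheta G x y) * f y)).

Definition degree (x : V) : R :=
  (wm0 G x ^+ 2)^-1 * \sum_(y \in [set: V]) wE G x y.

Definition mult_op (W : V -> R) (f : V -> R[i]) (x : V) : R[i] := (W x)%:C * f x.

Definition W_m (m : V -> R) (x : V) : R :=
  (wm0 G x ^+ 2)^-1 *
  \sum_(y \in [set: V]) (wE G x y * (m y / m x) * (wm0 G x / wm0 G y)).

Definition V_m (m : V -> R) (x : V) : R := degree x - W_m m x.

End Graph.

(* Main.v *)
Require Import Defs.
From HB Require Import structures.
From mathcomp Require Import all_boot all_order all_algebra.
From mathcomp Require Import all_classical all_reals.
From mathcomp Require Import trigo.
From mathcomp Require Import complex.
From mathcomp Require Import ring lra.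
Import Order.TTheory GRing.Theory Num.Theory.
Local Open Scope complex_scope.
Local Open Scope ring_scope.

Lemma conjE (R : realType) (x : R[i]) : x^* = conjc x.
Proof. reflexivity. Qed.

Section Aux.

Lemma pairm (R : realType) (p q cs sn : R) (u v : R[i]) :
  0 < p -> p * q = 1 -> cs ^+ 2 + sn ^+ 2 = 1 ->
  0 <= (p%:C)%C * (u^* * u) + (q%:C)%C * (v^* * v) - u^* * (cs +i* sn)%C * v
        - v^* * (cs +i* (- sn))%C * u.
Proof.
case: u => a b; case: v => c d => hp hpq hcs.
rewrite !conjE; simpc. apply/andP; split.
  apply/eqP; ring.
have h1 : 0 <= p * (p * (a ^+ 2 + b ^+ 2) + q * (c ^+ 2 + d ^+ 2) - 2 * (a * (cs * c - sn * d) + b * (cs * d + sn * c))).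
  have -> : p * (p * (a ^+ 2 + b ^+ 2) + q * (c ^+ 2 + d ^+ 2) - 2 * (a * (cs * c - sn * d) + b * (cs * d + sn * c))) =
     (p * a - (cs * c - sn * d)) ^+ 2 + (p * b - (cs * d + sn * c)) ^+ 2 + (p * q - (cs ^+ 2 + sn ^+ 2)) * (c ^+ 2 + d ^+ 2) by ring.
  rewrite hpq hcs subrr mul0r addr0; apply: addr_ge0; apply: sqr_ge0.
rewrite pmulr_rge0 // in h1.
lra.
Qed.

Lemma pairp (R : realType) (p q cs sn : R) (u v : R[i]) :
  0 < p -> p * q = 1 -> cs ^+ 2 + sn ^+ 2 = 1 ->
  0 <= (p%:C)%C * (u^* * u) + (q%:C)%C * (v^* * v) + u^* * (cs +i* sn)%C * v
        + v^* * (cs +i* (- sn))%C * u.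
Proof.
case: u => a b; case: v => c d => hp hpq hcs.
rewrite !conjE; simpc. apply/andP; split.
  apply/eqP; ring.
have h1 : 0 <= p * (p * (a ^+ 2 + b ^+ 2) + q * (c ^+ 2 + d ^+ 2) + 2 * (a * (cs * c - sn * d) + b * (cs * d + sn * c))).
  have -> : p * (p * (a ^+ 2 + b ^+ 2) + q * (c ^+ 2 + d ^+ 2) + 2 * (a * (cs * c - sn * d) + b * (cs * d + sn * c))) =
     (p * a + (cs * c - sn * d)) ^+ 2 + (p * b + (cs * d + sn * c)) ^+ 2 + (p * q - (cs ^+ 2 + sn ^+ 2)) * (c ^+ 2 + d ^+ 2) by ring.
  rewrite hpq hcs subrr mul0r addr0; apply: addr_ge0; apply: sqr_ge0.
rewrite pmulr_rge0 // in h1.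
lra.
Qed.
End Aux.

Lemma fsumT (U : zmodType) (V : choiceType) (r : seq V) (F : V -> U) :
  uniq r -> (forall i, i \notin r -> F i = 0) ->
  \sum_(i \in [set: V]) F i = \sum_(i <- r) F i.
Proof.
move=> ur h; rewrite (fsbigE r) //.
all: try (by move=> i _; apply: h).
by apply: eq_bigl => i; rewrite in_setT.
Qed.

Lemma sym_ge0 (U : numDomainType) (V : Type) (T : seq V) (h : V -> V -> U) :
  (forall x y, 0 <= h x y + h y x) ->
  0 <= \sum_(x <- T) \sum_(y <- T) h x y.
Proof.
move=> H.
rewrite -(pmulrn_lge0 _ (isT : (0 < 2)%N)) mulr2n.
rewrite {2}exchange_big /= -big_split /=.
apply: sumr_ge0 => x _; rewrite -big_split /=.
by apply: sumr_ge0 => y _.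
Qed.

Section Main.
Variables (R : realType) (V : countType) (G : weighted_graph R V) (m : V -> R).
Hypothesis mpos : forall x, 0 < m x.
Variable f : V -> R[i].
Variable T : seq V.
Hypothesis uT : uniq T.
Hypothesis hx : forall x, f x != 0 -> x \in T.
Hypothesis hxy : forall x y, f x != 0 -> wE G x y != 0 -> y \in T.

Lemma m0ne x : wm0 G x != 0. Proof. by rewrite gt_eqF // wm0_gt0. Qed.
Lemma mne x : m x != 0. Proof. by rewrite gt_eqF. Qed.

Lemma inner_T g : inner G f g = \sum_(x <- T) ((wm0 G x ^+ 2)%:C * (f x)^* * g x).
Proof.
rewrite /inner (@fsumT _ _ T _ uT) // => x xT.
have -> : f x = 0 by apply/eqP; apply: contraNT xT; apply: hx.
by rewrite conjC0 mulr0 mul0r.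
Qed.

Lemma Esum_T (F : V -> V -> R[i]) x : f x != 0 ->
  (forall y, wE G x y = 0 -> F x y = 0) ->
  \sum_(y \in [set: V]) F x y = \sum_(y <- T) F x y.
Proof.
move=> fx H; apply: (@fsumT _ _ T _ uT) => y yT; apply: H.
by apply/eqP; apply: contraNT yT; apply: hxy.
Qed.

Lemma EsumR_T (F : V -> V -> R) x : f x != 0 ->
  (forall y, wE G x y = 0 -> F x y = 0) ->
  \sum_(y \in [set: V]) F x y = \sum_(y <- T) F x y.
Proof.
move=> fx H; apply: (@fsumT _ _ T _ uT) => y yT; apply: H.
by apply/eqP; apply: contraNT yT; apply: hxy.
Qed.

Lemma c1c2 x : (wm0 G x ^+ 2)%:C * ((wm0 G x ^+ 2)^-1)%:C = 1 :> R[i].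
Proof. by rewrite -rmorphM mulfV ?rmorph1 // expf_neq0 // m0ne. Qed.

Lemma innerL : inner G f (laplacian G f) =
  \sum_(x <- T) \sum_(y <- T) ((wE G x y)%:C * ((f x)^* * (f x - expi (wtheta G x y) * f y))).
Proof.
rewrite inner_T; apply: eq_bigr => x _.
have [->|fx] := eqVneq (f x) 0.
  by rewrite !conjC0 !(mulr0, mul0r) big1 // => y _; rewrite !(mulr0, mul0r).
rewrite /laplacian (Esum_T (fun x y => (wE G x y)%:C * (f x - expi (wtheta G x y) * f y))) //; last first.
  by move=> y ->; rewrite mul0r.
rewrite !mulr_sumr; apply: eq_bigr => y _.
have h := c1c2 x.
transitivity (((wm0 G x ^+ 2)%:C * ((wm0 G x ^+ 2)^-1)%:C) *
   ((wE G x y)%:C * ((f x)^* * (f x - expi (wtheta G x y) * f y)))); first ring.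
by rewrite h mul1r.
Qed.

Lemma innerW (W : V -> R) (c : V -> V -> R) :
  (forall x, f x != 0 -> W x = (wm0 G x ^+ 2)^-1 * \sum_(y <- T) c x y) ->
  inner G f (mult_op W f) =
  \sum_(x <- T) \sum_(y <- T) ((c x y)%:C * ((f x)^* * f x)).
Proof.
move=> HW; rewrite inner_T; apply: eq_bigr => x _.
have [->|fx] := eqVneq (f x) 0.
  by rewrite !conjC0 !(mulr0, mul0r) big1 // => y _; rewrite !(mulr0, mul0r).
rewrite /mult_op HW //.
have -> : ((wm0 G x ^+ 2)^-1 * \sum_(y <- T) c x y)%:C = ((wm0 G x ^+ 2)^-1)%:C * (\sum_(y <- T) c x y)%:C :> R[i] by rewrite rmorphM.
rewrite rmorph_sum /= mulr_sumr mulr_suml mulr_sumr; apply: eq_bigr => y _.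
have h := c1c2 x.
transitivity (((wm0 G x ^+ 2)%:C * ((wm0 G x ^+ 2)^-1)%:C) *
   ((c x y)%:C * ((f x)^* * f x))); first ring.
by rewrite h mul1r.
Qed.

Lemma deg_T x : f x != 0 -> degree G x = (wm0 G x ^+ 2)^-1 * \sum_(y <- T) wE G x y.
Proof. by move=> fx; rewrite /degree (EsumR_T (fun x y => wE G x y)). Qed.

Lemma W_T x : f x != 0 -> W_m G m x = (wm0 G x ^+ 2)^-1 *
   \sum_(y <- T) (wE G x y * (m y / m x) * (wm0 G x / wm0 G y)).
Proof.
move=> fx; rewrite /W_m (EsumR_T (fun x y => wE G x y * (m y / m x) * (wm0 G x / wm0 G y))) //.
by move=> y ->; rewrite !mul0r.
Qed.

Definition kk x y := (m y / m x) * (wm0 G x / wm0 G y).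

Lemma kk_pos x y : 0 < kk x y.
Proof. by rewrite /kk !mulr_gt0 ?invr_gt0 ?wm0_gt0. Qed.

Lemma kk_inv x y : kk x y * kk y x = 1.
Proof. rewrite /kk; have := mne x; have := mne y; have := m0ne x; have := m0ne y. by move=> *; field; apply/and4P. Qed.

Lemma expi_anti x y : expi (wtheta G y x) = (cos (wtheta G x y) +i* (- sin (wtheta G x y)))%C.
Proof. by rewrite /expi wtheta_anti cosN sinN. Qed.


Lemma part1 : inner G f (mult_op (V_m G m) f) <= inner G f (laplacian G f).
Proof.
rewrite innerL (@innerW _ ( fun x y => wE G x y - wE G x y * (m y / m x) * (wm0 G x / wm0 G y))); last first.
  by move=> x fx; rewrite /V_m deg_T // W_T // -mulrBr -sumrB.
rewrite -subr_ge0 -sumrB.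
under eq_bigr do rewrite -sumrB.
apply: sym_ge0 => x y.
have H := @pairm _ _ _ _ _ (f x) (f y) (kk_pos x y) (kk_inv x y) (cos2Dsin2 (wtheta G x y)).
have H2 := mulr_ge0 (_ : 0 <= (wE G x y)%:C) H.
apply: le_trans (H2 _) _; first by rewrite ler0c wE_ge0.
rewrite le_eqVlt; apply/orP; left; apply/eqP.
rewrite (expi_anti x y) [wE G y x]wE_sym /kk /expi.
rewrite !rmorphB !rmorphM /=.
ring.
Qed.

Lemma part2 : inner G f (laplacian G f) <= inner G f (mult_op (fun x => degree G x + W_m G m x) f).
Proof.
rewrite innerL (@innerW _ ( fun x y => wE G x y + wE G x y * (m y / m x) * (wm0 G x / wm0 G y))); last first.
  by move=> x fx; rewrite deg_T // W_T // -mulrDr -big_split.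
rewrite -subr_ge0 -sumrB.
under eq_bigr do rewrite -sumrB.
apply: sym_ge0 => x y.
have H := @pairp _ _ _ _ _ (f x) (f y) (kk_pos x y) (kk_inv x y) (cos2Dsin2 (wtheta G x y)).
have H2 := mulr_ge0 (_ : 0 <= (wE G x y)%:C) H.
apply: le_trans (H2 _) _; first by rewrite ler0c wE_ge0.
rewrite le_eqVlt; apply/orP; left; apply/eqP.
rewrite (expi_anti x y) [wE G y x]wE_sym /kk /expi.
rewrite !rmorphD !rmorphM /=.
ring.
Qed.
End Main.

Lemma exT (R : realType) (V : countType) (G : weighted_graph R V) (f : V -> R[i]) :
  locally_finite G -> finsupp f ->
  exists T : seq V, [/\ uniq T, forall x, f x != 0 -> x \in T &
     forall x y, f x != 0 -> wE G x y != 0 -> y \in T].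
Proof.
move=> lf fs.
pose S : seq V := finmap.enum_fset (fset_set [set x | f x != 0]).
exists (undup (S ++ flatten [seq finmap.enum_fset (fset_set [set y | neighbors G x y]) | x <- S])).
have inS x : f x != 0 -> x \in S.
  by move=> fx; rewrite /S in_fset_set // inE.
split.
- exact: undup_uniq.
- by move=> x fx; rewrite mem_undup mem_cat inS.
- move=> x y fx exy; rewrite mem_undup mem_cat; apply/orP; right.
  apply/flatten_mapP; exists x; first exact: inS.
  by rewrite in_fset_set // inE.
Qed.

Theorem proposition1p1 (R : realType) (V : countType) (G : weighted_graph R V)
  (m : V -> R) :
  locally_finite G -> connected_graph G -> no_loops G ->
  (forall x, 0 < m x) ->
  (forall f : V -> R[i], finsupp f ->
     inner G f (mult_op (V_m G m) f) <= inner G f (laplacian G f)) /\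
  (bipartite G ->
   forall f : V -> R[i], finsupp f ->
     inner G f (laplacian G f) <=
     inner G f (mult_op (fun x => degree G x + W_m G m x) f)).
Proof.
move=> lf _ _ mpos; split.
  move=> f fs; have [T [uT hx hxy]] := @exT _ _ _ f lf fs.
  exact: (@part1 _ _ G m mpos f T uT hx hxy).
move=> _ f fs; have [T [uT hx hxy]] := @exT _ _ _ f lf fs.
exact: (@part2 _ _ G m mpos f T uT hx hxy).
Qed.
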